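(* Let $\hat B=(\hat\beta_{k,j})$ and $\tilde B_0=(\tilde\beta^0_{k,j})$ be real $p\times p$ matrices, let $\hat s$ and $\tilde s$ be their numbers of nonzero entries, and let $\tilde\lambda>0$, $0\le\eta_1<1$, $0<\eta_2^2<1-\eta_1$. Suppose $\|\hat B-\tilde B_0\|_F\le\tilde\lambda\sqrt{\tilde s}$ and $$\#\{(k,j):|\tilde\beta^0_{k,j}|\ge\tilde\lambda/\eta_2\}\ge(1-\eta_1)\tilde s.$$ Then $\hat s\ge(1-\eta_1-\eta_2^2)\tilde s$.
   Context: $\|\cdot\|_F$ denotes the Frobenius norm. *)

(* Defs.v *)
From HB Require Import structures.
From mathcomp Require Import all_boot all_order all_algebra.
From mathcomp Require Import reals.
Set Implicit Arguments. Unset Strict Implicit. Unset Printing Implicit Defensive.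
Import Order.TTheory GRing.Theory Num.Theory.
Local Open Scope ring_scope.

Definition frobenius (R : realType) (m n : nat) (A : 'M[R]_(m, n)) : R :=
  Num.sqrt (\sum_(i < m) \sum_(j < n) A i j ^+ 2).

Definition nnz (R : realType) (m n : nat) (A : 'M[R]_(m, n)) : nat :=
  #|[set ij : 'I_m * 'I_n | A ij.1 ij.2 != 0]|.

(* Main.v *)
Require Import Defs.
From HB Require Import structures.
From mathcomp Require Import all_boot all_order all_algebra.
From mathcomp Require Import reals.
From mathcomp Require Import ring lra.
Import Order.TTheory GRing.Theory Num.Theory.
Local Open Scope ring_scope.

Theorem lemma7p2 (R : realType) (p : nat) (Bhat B0 : 'M[R]_p)
  (lam eta1 eta2 : R)
  (hlam : 0 < lam) (heta1 : 0 <= eta1) (heta1' : eta1 < 1)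
  (heta2pos : 0 < eta2) (heta2 : 0 < eta2 ^+ 2) (heta2' : eta2 ^+ 2 < 1 - eta1)
  (hF : frobenius (Bhat - B0) <= lam * Num.sqrt (nnz B0)%:R)
  (hbig : (1 - eta1) * (nnz B0)%:R <=
          #|[set ij : 'I_p * 'I_p | lam / eta2 <= `|B0 ij.1 ij.2|]|%:R) :
  (1 - eta1 - eta2 ^+ 2) * (nnz B0)%:R <= (nnz Bhat)%:R.
Proof.
set S := [set ij : 'I_p * 'I_p | lam / eta2 <= `|B0 ij.1 ij.2|] in hbig *.
set Z := [set ij in S | Bhat ij.1 ij.2 == 0].
set W := [set ij in S | Bhat ij.1 ij.2 != 0].
have hSZW : #|S| = (#|Z| + #|W|)%N.
  rewrite -(cardsID [set ij | Bhat ij.1 ij.2 == 0] S) /Z /W.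
  by congr (_ + _)%N; apply: eq_card => x; rewrite !inE // andbC.
have hW : (#|W| <= nnz Bhat)%N.
  rewrite /nnz; apply: subset_leq_card; apply/subsetP; move=> y; rewrite !inE; by case/andP.
set s := (nnz B0)%:R : R.
have s0 : 0 <= s by rewrite /s ler0n.
set c := (lam / eta2) ^+ 2.
have c0 : 0 < c by rewrite /c exprn_gt0 // divr_gt0.
have lamc : lam ^+ 2 = c * eta2 ^+ 2.
  rewrite /c expr_div_n mulrAC -mulrA divff ?mulr1 //; lra.
set f := fun ij : 'I_p * 'I_p => (Bhat - B0) ij.1 ij.2 ^+ 2.
have hsum : \sum_ij f ij <= lam ^+ 2 * s.
  have e : \sum_ij f ij = frobenius (Bhat - B0) ^+ 2.
    rewrite /frobenius sqr_sqrtr; last by apply: sumr_ge0 => i _; apply: sumr_ge0 => j _; apply: sqr_ge0.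
    by rewrite pair_big.
  rewrite e; have -> : lam ^+ 2 * s = (lam * Num.sqrt s) ^+ 2 by rewrite exprMn sqr_sqrtr.
  apply: lerXn2r => //; rewrite ?nnegrE //.
    by rewrite /frobenius sqrtr_ge0.
  by rewrite mulr_ge0 ?sqrtr_ge0 // ltW.
have hZ : c *+ #|Z| <= \sum_ij f ij.
  rewrite (bigID (mem Z)) /= -[c *+ _]addr0; apply: lerD.
    rewrite -sumr_const; apply: ler_sum => ij; rewrite inE => /andP[].
    rewrite inE => hb /eqP h0; rewrite /f !mxE h0 sub0r sqrrN /c.
    rewrite -(real_normK (num_real (B0 ij.1 ij.2))); apply: lerXn2r => //; rewrite ?nnegrE //.
    by apply: ltW; rewrite divr_gt0.
  by apply: sumr_ge0 => i _; rewrite /f sqr_ge0.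
have hZ' : (#|Z|%:R : R) <= eta2 ^+ 2 * s.
  have : c * #|Z|%:R <= c * (eta2 ^+ 2 * s).
    by rewrite mulrA -lamc mulr_natr; exact: le_trans hZ hsum.
  by rewrite ler_pM2l.
have hW' : (#|W|%:R : R) <= (nnz Bhat)%:R by rewrite ler_nat.
move: hbig; rewrite hSZW natrD => hb.
lra.
Qed.
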